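(* Let $\mathcal L$ be a non-trivial geometric lattice, let $(\mathcal E_1,\iota_1)$ and $(\mathcal E_2,\iota_2)$ be modular extensions of $\mathcal L$, and let $F$ be a flat of $\mathcal E_1$ with $F\ge F_{\iota_1}$. If $F$ is modular in $\mathcal E_1$, then $(F,\hat1_{\mathcal E_2})$ is a modular flat of the pushout $\mathcal E_1\cup_{\mathcal L}\mathcal E_2$.
   Context: A geometric lattice is a finite lattice (bottom $\hat0$, top $\hat1$, join $\vee$, meet $\wedge$) which is ranked (rank function $\mathrm{rk}$), atomic and semimodular ($\mathrm{rk}(F_1\wedge F_2)+\mathrm{rk}(F_1\vee F_2)\le\mathrm{rk}(F_1)+\mathrm{rk}(F_2)$); its elements are called flats, and it is non-trivial if it has at least two elements. A flat $F$ is modular if $\mathrm{rk}(F\wedge F')+\mathrm{rk}(F\vee F')=\mathrm{rk}(F)+\mathrm{rk}(F')$ for every flat $F'$. An embedding of geometric lattices is an injective order-preserving map preserving joins and sending atoms to atoms. A modular extension of $\mathcal L$ is a pair $(\mathcal E,\iota)$ with $\mathcal E$ a geometric lattice and $\iota:\mathcal L\to\mathcal E$ an embedding whose image is an interval $[\hat0,F_\iota]$ with $F_\iota$ modular in $\mathcal E$. The pushout $\mathcal E_1\cup_{\mathcal L}\mathcal E_2$ of two modular extensions is the subposet of $\mathcal E_1\times\mathcal E_2$ consisting of the pairs $(F_1,F_2)$ with $\iota_1^{-1}(F_1\wedge F_{\iota_1})=\iota_2^{-1}(F_2\wedge F_{\iota_2})$; it is a geometric lattice with rank $\mathrm{rk}(F_1,F_2)=\mathrm{rk}_{\mathcal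 E_1}(F_1)+\mathrm{rk}_{\mathcal E_2}(F_2)-\mathrm{rk}_{\mathcal L}(\iota_1^{-1}(F_1\wedge F_{\iota_1}))$. *)

(* Defs.v *)
From HB Require Import structures.
From mathcomp Require Import all_boot all_order.
Set Implicit Arguments. Unset Strict Implicit. Unset Printing Implicit Defensive.
Import Order.Theory.
Local Open Scope order_scope.

Section Geometric.
Context {d : Order.disp_t} {T : finTBLatticeType d}.

Definition covers (x y : T) : bool :=
  (x < y) && [forall z : T, ~~ ((x < z) && (z < y))].

Definition is_atom (a : T) : bool := covers \bot a.

Definition ranked (rk : T -> nat) : Prop :=
  rk \bot = 0%N /\ forall x y : T, covers x y -> rk y = (rk x).+1.

Definition atomic : Prop :=
  forall x : T, x = \join_(a : T | is_atom a && (a <= x)) a.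

Definition semimodular (rk : T -> nat) : Prop :=
  forall x y : T, (rk (x `&` y) + rk (x `|` y) <= rk x + rk y)%N.

Definition geometric (rk : T -> nat) : Prop :=
  ranked rk /\ atomic /\ semimodular rk.

Definition nontrivial : Prop := (\bot : T) != \top.

Definition modular_flat (rk : T -> nat) (F : T) : Prop :=
  forall F' : T, (rk (F `&` F') + rk (F `|` F') = rk F + rk F')%N.

End Geometric.

Section Ext.
Context {dL : Order.disp_t} {L : finTBLatticeType dL}
        {dE : Order.disp_t} {E : finTBLatticeType dE}.

Definition embedding (iota : L -> E) : Prop :=
  injective iota /\
  (forall x y : L, x <= y -> iota x <= iota y) /\
  (forall x y : L, iota (x `|` y) = iota x `|` iota y) /\
  (forall a : L, is_atom a -> is_atom (iota a)).

Definition modular_extension (rkE : E -> nat) (iota : L -> E) (Fi : E) : Prop :=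
  geometric rkE /\ embedding iota /\
  (forall y : E, (exists x : L, iota x = y) <-> (\bot <= y) && (y <= Fi)) /\
  modular_flat rkE Fi.

End Ext.

Section Pushout.
Context {dL : Order.disp_t} {L : finTBLatticeType dL}
        {d1 : Order.disp_t} {E1 : finTBLatticeType d1}
        {d2 : Order.disp_t} {E2 : finTBLatticeType d2}.
Variables (rkL : L -> nat) (rk1 : E1 -> nat) (rk2 : E2 -> nat).
Variables (iota1 : L -> E1) (Fi1 : E1) (iota2 : L -> E2) (Fi2 : E2).

(* membership in the pushout E1 u_L E2 (a subposet of E1 x E2):
   iota1^-1(F1 /\ Fi1) = iota2^-1(F2 /\ Fi2) *)
Definition po_mem (p : E1 * E2) : Prop :=
  exists X : L, iota1 X = p.1 `&` Fi1 /\ iota2 X = p.2 `&` Fi2.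

Definition po_le (p q : E1 * E2) : bool := (p.1 <= q.1) && (p.2 <= q.2).

Definition po_preim (p : E1 * E2) : L :=
  odflt \bot [pick X : L | iota1 X == p.1 `&` Fi1].

Definition po_rk (p : E1 * E2) : nat :=
  (rk1 p.1 + rk2 p.2 - rkL (po_preim p))%N.

Definition po_is_meet (p q m : E1 * E2) : Prop :=
  po_mem m /\ po_le m p /\ po_le m q /\
  forall z, po_mem z -> po_le z p -> po_le z q -> po_le z m.

Definition po_is_join (p q j : E1 * E2) : Prop :=
  po_mem j /\ po_le p j /\ po_le q j /\
  forall z, po_mem z -> po_le p z -> po_le q z -> po_le j z.

Definition po_modular (P : E1 * E2) : Prop :=
  po_mem P /\
  forall G, po_mem G -> exists M J, po_is_meet P G M /\ po_is_join P G J /\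
     (po_rk M + po_rk J = po_rk P + po_rk G)%N.

End Pushout.

(* Main.v *)
Require Import Defs.
From mathcomp Require Import all_boot all_order.
From mathcomp Require Import zify.
Import Order.Theory.
Local Open Scope order_scope.

Section Chain.
Context {d : Order.disp_t} {T : finTBLatticeType d}.

Definition ivl (x y : T) := [pred w : T | (x < w) && (w <= y)].

Lemma ivl_proper {x z y : T} : x < z -> z <= y -> (ivl z y) \proper (ivl x y).
Proof.
move=> xz zy; apply/properP; split.
  apply/subsetP=> w; rewrite !inE => /andP[zw ->]; by rewrite (lt_trans xz zw).
by exists z; rewrite !inE ?xz ?zy ?ltxx.
Qed.

Lemma ivl_proper2 {x w z : T} : x < z -> w < z -> (ivl x w) \proper (ivl x z).
Proof.
move=> xz wz; apply/properP; split.
  apply/subsetP=> v; rewrite !inE => /andP[-> vw] /=; exact: (le_trans vw (ltW wz)).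
by exists z; rewrite !inE ?xz ?lexx //= (lt_geF wz).
Qed.

Lemma chain_ind (P : T -> T -> Prop) :
  (forall x, P x x) ->
  (forall x z y, covers x z -> z <= y -> P z y -> P x y) ->
  forall x y, x <= y -> P x y.
Proof.
move=> Hrefl Hstep.
suff H: forall n x y, (#|ivl x y| <= n)%N -> x <= y -> P x y.
  by move=> x y; apply: (H _ x y (leqnn _)).
elim=> [|n IH] x y Hc; rewrite le_eqVlt => /orP[/eqP<-|xy]; first exact: Hrefl.
- have: y \in ivl x y by rewrite inE xy lexx.
  by move: Hc; rewrite leqn0 => /eqP/card0_eq ->.
- exact: Hrefl.
have Py : (fun z => (x < z) && (z <= y)) y by rewrite /= xy lexx.
case: (@arg_minnP _ y (fun z => (x < z) && (z <= y)) (fun z => #|ivl x z|) Py) => z /andP[xz zy] zmin.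
have cov : covers x z.
  rewrite /covers xz /=; apply/forallP=> w; apply/negP=> /andP[xw wz].
  have := zmin w; rewrite xw (le_trans (ltW wz) zy) => /(_ isT).
  have := proper_card (ivl_proper2 xz wz : ivl x w \proper ivl x z). move=> h1 h2; move: (leq_trans h1 h2); by rewrite ltnn.
apply: (Hstep x z y cov zy); apply: IH => //.
have := proper_card (ivl_proper xz zy : ivl z y \proper ivl x y) => h; exact: (leq_trans h Hc).
Qed.
End Chain.

Lemma rk_mono {d : Order.disp_t} {T : finTBLatticeType d} (rk : T -> nat) :
  ranked rk -> forall x y : T, x <= y -> (rk x <= rk y)%N /\ (x < y -> (rk x < rk y)%N).
Proof.
move=> [_ Hc]; apply: chain_ind.
  by move=> x; rewrite ltxx.
move=> x z y cxz zy [IH1 IH2]; have := Hc _ _ cxz => e.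
split; first by lia.
by move=> _; lia.
Qed.

Lemma rk_embed {dL : Order.disp_t} {L : finTBLatticeType dL}
  {dE : Order.disp_t} {E : finTBLatticeType dE} (rkL : L -> nat) (rkE : E -> nat)
  (iota : L -> E) :
  ranked rkL -> ranked rkE -> embedding iota -> iota \bot = \bot ->
  forall y, (rkL y <= rkE (iota y))%N.
Proof.
move=> rL rE [inj [mono _]] ib.
have H : forall x y, x <= y -> (rkL y + rkE (iota x) <= rkL x + rkE (iota y))%N.
  apply: chain_ind; first by move=> x; lia.
  move=> x z y cxz zy IH.
  have e := proj2 rL _ _ cxz.
  move: cxz => /andP[xz _].
  have : iota x < iota z.
    rewrite lt_neqAle mono ?(ltW xz) // andbT.
    apply/negP=> /eqP/inj ex; by move: xz; rewrite ex ltxx.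
  move=> ixz; have h := proj2 (rk_mono rkE rE _ _ (ltW ixz)) ixz; lia.
move=> y; have := H \bot y (le0x y); rewrite ib (proj1 rL) (proj1 rE); lia.
Qed.

Lemma iota_top {dL : Order.disp_t} {L : finTBLatticeType dL}
  {dE : Order.disp_t} {E : finTBLatticeType dE} (rkE : E -> nat) (iota : L -> E) Fi :
  modular_extension rkE iota Fi -> iota \top = Fi /\ iota \bot = \bot.
Proof.
move=> [_ [[_ [mono _]] [img _]]].
have [x hx] : exists x, iota x = Fi by apply/img; rewrite le0x lexx.
have [b hb] : exists x, iota x = \bot by apply/img; rewrite le0x le0x.
split; apply/le_anti/andP; split.
- by have /img/andP[] : exists x, iota x = iota \top by exists \top.
- by rewrite -hx mono // lex1.
- by rewrite -hb mono // le0x.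
- exact: le0x.
Qed.

Theorem lemma4
  (dL : Order.disp_t) (L : finTBLatticeType dL) (rkL : L -> nat)
  (d1 : Order.disp_t) (E1 : finTBLatticeType d1) (rk1 : E1 -> nat)
  (d2 : Order.disp_t) (E2 : finTBLatticeType d2) (rk2 : E2 -> nat)
  (iota1 : L -> E1) (Fi1 : E1) (iota2 : L -> E2) (Fi2 : E2)
  (F : E1) :
  geometric rkL -> nontrivial (T := L) ->
  modular_extension rk1 iota1 Fi1 ->
  modular_extension rk2 iota2 Fi2 ->
  Fi1 <= F ->
  modular_flat rk1 F ->
  po_modular rkL rk1 rk2 iota1 Fi1 iota2 Fi2 (F, \top).
Proof.
move=> [rL _] _ ME1 ME2 FiF modF.
have [t1 b1] := iota_top _ _ _ ME1; have [t2 b2] := iota_top _ _ _ ME2.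
move: (ME1) (ME2) => [[r1 _] [[inj1 _] _]] [[r2 _] [emb2 _]].
have preim : forall (p : E1 * E2) (X : L), iota1 X = p.1 `&` Fi1 -> po_preim iota1 Fi1 p = X.
  move=> p X hX; rewrite /po_preim.
  case: pickP.
    by move=> X2 /eqP h /=; apply: inj1; rewrite h hX.
  by move=> no; move: (no X); rewrite hX eqxx.
have FFi : F `&` Fi1 = Fi1 by apply/meet_idPr.
split.
  by exists \top; rewrite /= FFi t1 meet1x t2.
move=> [G1 G2] [X /= [h1 h2]].
exists (F `&` G1, G2), (F `|` G1, \top).
split; [|split].
- split; first by exists X; rewrite /= meetAC FFi meetC.
  split; first by rewrite /po_le /= leIl lex1.
  split; first by rewrite /po_le /= leIr lexx.
  by move=> [z1 z2] _; rewrite /po_le /= lexI => /andP[-> _] /andP[-> ->].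
- split.
    exists \top; rewrite /= t1 t2 meet1x; split => //.
    by apply/esym/meet_idPr; rewrite (le_trans FiF) // leUl.
  split; first by rewrite /po_le /= leUl lexx.
  split; first by rewrite /po_le /= leUr lex1.
  by move=> [z1 z2] _; rewrite /po_le /= leUx => /andP[-> ->] /andP[-> _].
rewrite /po_rk /=.
rewrite (preim (F `&` G1, G2) X); last by rewrite /= meetAC FFi meetC.
rewrite (preim (F `|` G1, \top) \top); last first.
  by rewrite /= t1; apply/esym/meet_idPr; rewrite (le_trans FiF) // leUl.
rewrite (preim (F, \top) \top); last by rewrite /= t1 FFi.
rewrite (preim (G1, G2) X) //.
have m := modF G1.
have e1 := rk_embed rkL rk2 iota2 rL r2 emb2 b2 X.
have e2 := rk_embed rkL rk2 iota2 rL r2 emb2 b2 \top.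
have m1 := proj1 (rk_mono rk2 r2 _ _ (leIl G2 Fi2)).
have m2 := proj1 (rk_mono rk2 r2 _ _ (lex1 Fi2)).
rewrite h2 in e1; rewrite t2 in e2.
lia.
Qed.
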